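(* Let $(G,\prec)$ be a POP-graph and $e_1,e_2,e,e'\in E(G)$. (1) If $e_1\to e$, $e_2\to e$ and $e_1\prec e'\prec e_2$, then $e_1\not\to e'$ implies $e'\to e$. (2) If $e\to e_1$, $e\to e_2$ and $e_1\prec e'\prec e_2$, then $e'\not\to e_2$ implies $e\to e'$.
   Context: A progressive graph is a finite directed acyclic graph (parallel edges allowed) in which every source and every sink has degree one. For edges write $e\to e'$ if $e\neq e'$ and there is a directed path whose first edge is $e$ and last edge is $e'$. A planar order on $G$ is a linear order $\prec$ on $E(G)$ such that (P1) $e_1\to e_2$ implies $e_1\prec e_2$; (P2) if $e_1\prec e_2\prec e_3$ and $e_1\to e_3$ then $e_1\to e_2$ or $e_2\to e_3$. A POP-graph is a progressive graph with a planar order. *)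

(* Defs.v *)
From mathcomp Require Import all_boot.
Set Implicit Arguments. Unset Strict Implicit. Unset Printing Implicit Defensive.

(* A finite directed graph with parallel edges: finite vertex type V, finite
   edge type E, each edge f going from [src f] to [tgt f]. *)

Section Graph.
Variables (V E : finType) (src tgt : E -> V).

Definition adj : rel E := fun f g => tgt f == src g.

Definition arrow (e e' : E) : bool := (e != e') && connect adj e e'.

Definition indeg (v : V) : nat := #|[set f | tgt f == v]|.
Definition outdeg (v : V) : nat := #|[set f | src f == v]|.

Definition acyclic : Prop := forall f g : E, adj f g -> ~~ connect adj g f.

Definition progressive : Prop :=
  [/\ acyclic,
      forall v, indeg v = 0 -> indeg v + outdeg v = 1
    & forall v, outdeg v = 0 -> indeg v + outdeg v = 1].

Definition strict_linear_order (lt : rel E) : Prop :=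
  [/\ irreflexive lt, transitive lt & forall x y, x != y -> lt x y || lt y x].

Definition planar_order (lt : rel E) : Prop :=
  [/\ strict_linear_order lt,
      (forall e1 e2, arrow e1 e2 -> lt e1 e2)
    & (forall e1 e2 e3, lt e1 e2 -> lt e2 e3 -> arrow e1 e3 ->
         arrow e1 e2 || arrow e2 e3)].

End Graph.

(* Main.v *)
Require Import Defs.
From mathcomp Require Import all_boot.

Theorem lemma3p1 (V E : finType) (src tgt : E -> V) (lt : rel E)
  (Hprog : progressive src tgt) (Hpo : planar_order src tgt lt)
  (e1 e2 e e' : E) :
  (arrow src tgt e1 e -> arrow src tgt e2 e -> lt e1 e' -> lt e' e2 ->
     ~~ arrow src tgt e1 e' -> arrow src tgt e' e) /\
  (arrow src tgt e e1 -> arrow src tgt e e2 -> lt e1 e' -> lt e' e2 ->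
     ~~ arrow src tgt e' e2 -> arrow src tgt e e').
Proof.
case: Hpo => [[Hirr Htr Htot] P1 P2].
split.
- move=> h1e h2e h1' h'2 hn.
  case: (eqVneq e' e) => [Ee|ne].
    by subst e'; rewrite h1e in hn.
  case/orP: (Htot _ _ ne) => hlt.
    by case/orP: (P2 _ _ _ h1' hlt h1e) => // h; rewrite h in hn.
  have h2 := P1 _ _ h2e.
  have : lt e' e' by apply: (Htr e2) => //; apply: (Htr e).
  by rewrite Hirr.
- move=> he1 he2 h1' h'2 hn.
  have hee' : lt e e' by apply: (Htr e1) => //; apply: P1.
  by case/orP: (P2 _ _ _ hee' h'2 he2) => // h; rewrite h in hn.
Qed.
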